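(* Let $(A,\circ)$ be a permutative algebra and let $D_1,D_2:A\to A$ be derivations of $(A,\circ)$ with $D_1D_2=D_2D_1$. Define $[x,y]=D_1(x)\circ D_2(y)-D_2(x)\circ D_1(y)$ for $x,y\in A$. Then $(A,[\cdot,\cdot])$ is a Leibniz algebra, and $(A,\circ,[\cdot,\cdot])$ is a dual pre-Poisson algebra.
   Context: Field $\mathbb{F}$ of characteristic $0$. A permutative algebra: $x\circ(y\circ z)=(x\circ y)\circ z=(y\circ x)\circ z$. A derivation is a linear $D$ with $D(x\circ y)=D(x)\circ y+x\circ D(y)$. A Leibniz algebra: $[x,[y,z]]=[[x,y],z]+[y,[x,z]]$. A dual pre-Poisson algebra $(A,\circ,[\cdot,\cdot])$: $(A,\circ)$ permutative, $(A,[\cdot,\cdot])$ Leibniz, and $[x,y\circ z]=[x,y]\circ z+y\circ[x,z]$, $[x\circ y,z]=x\circ[y,z]+y\circ[x,z]$, $[x,y]\circ z=-[y,x]\circ z$. *)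

(* Defs.v *)
From mathcomp Require Import all_boot all_algebra.
Set Implicit Arguments. Unset Strict Implicit. Unset Printing Implicit Defensive.
Import GRing.Theory.
Local Open Scope ring_scope.

Definition bilinear_op (F : fieldType) (A : lmodType F) (mul : A -> A -> A) : Prop :=
  (forall x, linear (mul x)) /\ (forall y, linear (fun x => mul x y)).

Definition permutative (F : fieldType) (A : lmodType F) (mul : A -> A -> A) : Prop :=
  bilinear_op mul /\
  forall x y z, mul x (mul y z) = mul (mul x y) z /\ mul (mul x y) z = mul (mul y x) z.

Definition derivation (F : fieldType) (A : lmodType F) (mul : A -> A -> A)
  (D : A -> A) : Prop :=
  linear D /\ forall x y, D (mul x y) = mul (D x) y + mul x (D y).

Definition leibniz (F : fieldType) (A : lmodType F) (br : A -> A -> A) : Prop :=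
  bilinear_op br /\
  forall x y z, br x (br y z) = br (br x y) z + br y (br x z).

Definition dual_pre_poisson (F : fieldType) (A : lmodType F)
  (mul br : A -> A -> A) : Prop :=
  permutative mul /\ leibniz br /\
  (forall x y z, br x (mul y z) = mul (br x y) z + mul y (br x z)) /\
  (forall x y z, br (mul x y) z = mul x (br y z) + mul y (br x z)) /\
  (forall x y z, mul (br x y) z = - mul (br y x) z).

(* Main.v *)
From HB Require Import structures.
Require Import Defs.
From mathcomp Require Import all_boot all_algebra.
From mathcomp Require Import ring.
Import GRing.Theory.
Local Open Scope ring_scope.

Section SZ.
Variables (F : fieldType) (A : lmodType F).
Definition SZ := (F * A)%type.
HB.instance Definition _ := GRing.Zmodule.on SZ.
Definition szone : SZ := (1, 0).
Definition szmul (p q : SZ) : SZ := (p.1 * q.1, p.1 *: q.2 + q.1 *: p.2).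
Lemma szmulA : associative szmul.
Proof.
move=> [a x] [b y] [c z]; rewrite /szmul /=; congr (_, _); first by rewrite mulrA.
by rewrite !scalerDr !scalerA [c * a]mulrC [c * b]mulrC addrA.
Qed.
Lemma szmulC : commutative szmul.
Proof. by move=> [a x] [b y]; rewrite /szmul /= mulrC addrC. Qed.
Lemma szmul1 : left_id szone szmul.
Proof. by move=> [a x]; rewrite /szmul /= mul1r scale1r scaler0 addr0. Qed.
Lemma szmulD : left_distributive szmul +%R.
Proof.
move=> [a x] [b y] [c z]; rewrite /szmul /=; congr (_, _); first by rewrite mulrDl.
by rewrite scalerDl scalerDr addrACA.
Qed.
Lemma szone0 : szone != 0.
Proof. by rewrite /szone; apply/eqP => -[] /eqP; rewrite oner_eq0. Qed.
HB.instance Definition _ := GRing.Zmodule_isComNzRing.Build SZ szmulA szmulC szmul1 szmulD szone0.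
Definition szinj (x : A) : SZ := (0, x).
Lemma szinj_zmod : zmod_morphism szinj.
Proof. by move=> x y; rewrite /szinj; congr (_,_); rewrite subrr. Qed.
HB.instance Definition _ := GRing.isZmodMorphism.Build A SZ szinj szinj_zmod.
Lemma szinjI : injective szinj. Proof. by move=> x y [->]. Qed.
End SZ.

Lemma test (F : fieldType) (A : lmodType F) (a b c : A) : a + b - c = b - (c - a).
Proof. apply: (@szinjI F A). ring. Qed.

Section Lin.
Variables (F : fieldType) (A : lmodType F) (f : A -> A).
Hypothesis Hf : linear f.
Lemma linB x y : f (x - y) = f x - f y. Proof. exact: (@zmod_morphism_linear F A A *:%R f Hf). Qed.
Lemma lin0 : f 0 = 0. Proof. have := linB 0 0. by rewrite !subrr => ->. Qed.
Lemma linN x : f (- x) = - f x. Proof. by rewrite -sub0r linB lin0 sub0r. Qed.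
Lemma linD x y : f (x + y) = f x + f y. Proof. by rewrite -{1}[y]opprK linB linN opprK. Qed.
Lemma linZ a x : f (a *: x) = a *: f x. Proof. exact: (@scalable_linear F A A *:%R f Hf). Qed.
End Lin.

Theorem proposition2p16 (F : fieldType) (A : lmodType F)
  (mul : A -> A -> A) (D1 D2 : A -> A) :
  [pchar F] =i pred0 ->
  permutative mul ->
  derivation mul D1 -> derivation mul D2 ->
  (forall x, D1 (D2 x) = D2 (D1 x)) ->
  let br := fun x y => mul (D1 x) (D2 y) - mul (D2 x) (D1 y) in
  leibniz br /\ dual_pre_poisson mul br.
Proof.
move=> _ [[Ml Mr] Mass] [D1l D1d] [D2l D2d] Hc br.
have mA x y z : mul x (mul y z) = mul (mul x y) z by case: (Mass x y z).
have mC x y z : mul (mul x y) z = mul (mul y x) z by case: (Mass x y z).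
have mBr := fun x => @linB _ _ _ (Ml x).
have mDr := fun x => @linD _ _ _ (Ml x).
have mBl := fun x => @linB _ _ (fun u => mul u x) (Mr x).
have mDl := fun x => @linD _ _ (fun u => mul u x) (Mr x).
have mNl := fun x => @linN _ _ (fun u => mul u x) (Mr x).
have mZl := fun x => @linZ _ _ (fun u => mul u x) (Mr x).
have mNr := fun x => @linN _ _ _ (Ml x).
have d1N := @linN _ _ _ D1l. have d2N := @linN _ _ _ D2l.
have mZr := fun x => @linZ _ _ _ (Ml x).
have d1B := @linB _ _ _ D1l. have d1D := @linD _ _ _ D1l. have d1Z := @linZ _ _ _ D1l.
have d2B := @linB _ _ _ D2l. have d2D := @linD _ _ _ D2l. have d2Z := @linZ _ _ _ D2l.
have lz : leibniz br.
  split.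
    split=> [x a u v|y a u v]; rewrite /br.
      rewrite d1D d2D d1Z d2Z !mDr !mZr scalerBr.
    by apply: (@szinjI F A); ring.
  rewrite d1D d2D d1Z d2Z !mDl !mZl scalerBr.
  by apply: (@szinjI F A); ring.
  move=> x y z; rewrite /br.
  rewrite !(d1B, d2B, d1D, d2D, d1N, d2N, D1d, D2d, mBr, mBl, mDr, mDl, mNr, mNl, mA, Hc).
  rewrite !(mC (D1 y)) !(mC (D2 y)).
  by apply: (@szinjI F A); ring.
split=> //; split; first by split.
split=> //; split; [|split] => x y z; rewrite /br.
- rewrite !(D1d, D2d, mBr, mBl, mDr, mDl, mNr, mNl, mA) !(mC y).
  by apply: (@szinjI F A); ring.
- rewrite !(D1d, D2d, mBr, mBl, mDr, mDl, mNr, mNl, mA) !(mC y).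
  by apply: (@szinjI F A); ring.
- rewrite !mBl !(mC (D1 y)) !(mC (D2 y)).
  by apply: (@szinjI F A); ring.
Qed.
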